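(* Let $\mathcal{C}$ be a perfect k-category. Then every full, non-empty, closed subcategory of $\mathcal{C}$ (with the subspace topologies) is perfect.
   Context: A k-category is a small category whose object and morphism sets are k-spaces (compactly generated Hausdorff) such that the source, target, identity and composition maps are continuous. A non-empty k-category $\mathcal{C}$ is perfect when the map $\mathrm{Mor}(\mathcal{C})\to\mathrm{Ob}(\mathcal{C})\times\mathrm{Ob}(\mathcal{C})$, $f\mapsto(\text{source}(f),\text{target}(f))$, is a homeomorphism (product in k-spaces). *)

(* Defs.v *)
From HB Require Import structures.
From mathcomp Require Import all_boot all_order.
From mathcomp Require Import boolp classical_sets functions topology.
Set Implicit Arguments. Unset Strict Implicit. Unset Printing Implicit Defensive.
Local Open Scope classical_set_scope.

(* A "space" is a subset S of an ambient type together with a family of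
   open subsets of S.  All topologies below are built from the ambient
   MathComp-Analysis topologies. *)

Definition relopen (T : topologicalType) (S : set T) (U : set T) : Prop :=
  exists V, open V /\ U = V `&` S.

(* k-ification of the subspace topology on S (in the Hausdorff setting):
   U ⊆ S is k-open iff U ∩ K is open in K for every compact K ⊆ S. *)
Definition kopen (T : topologicalType) (S : set T) (U : set T) : Prop :=
  U `<=` S /\ forall K, K `<=` S -> compact K -> relopen K (U `&` K).

Definition is_kspace (T : topologicalType) (S : set T) : Prop :=
  (forall x y, S x -> S y -> x <> y ->
     exists U V, [/\ relopen S U, relopen S V, U x, V y & U `&` V = set0]) /\
  (forall U, kopen S U -> relopen S U).

(* product in k-spaces of (S1, subspace) and (S2, subspace): the k-ification
   of the product topology on S1 × S2 (the product topology of two subspaces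
   is the subspace topology of S1 `*` S2 in T1 * T2) *)
Definition kprod_open (T1 T2 : topologicalType) (S1 : set T1) (S2 : set T2)
  : set (T1 * T2) -> Prop := kopen (S1 `*` S2).

Definition cont (A B : Type) (SA : set A) (opA : set A -> Prop)
  (SB : set B) (opB : set B -> Prop) (f : A -> B) : Prop :=
  (forall x, SA x -> SB (f x)) /\
  (forall V, opB V -> V `<=` SB -> opA (SA `&` f @^-1` V)).

Definition homeo (A B : Type) (SA : set A) (opA : set A -> Prop)
  (SB : set B) (opB : set B -> Prop) (f : A -> B) : Prop :=
  [/\ set_bij SA SB f, cont SA opA SB opB f &
      forall U, U `<=` SA -> opA U -> opB (f @` U)].

(* data of a small category whose objects/morphisms lie in subsets of
   ambient topological types; comp g f = g ∘ f *)
Record cat_data (O M : topologicalType) := CatData {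
  ob : set O; mor : set M;
  src : M -> O; tgt : M -> O; idm : O -> M; comp : M -> M -> M }.

Definition composable (O M : topologicalType) (C : cat_data O M) : set (M * M) :=
  [set gf | mor C gf.1 /\ mor C gf.2 /\ tgt C gf.2 = src C gf.1].

Definition is_category (O M : topologicalType) (C : cat_data O M) : Prop :=
  [/\ (forall f, mor C f -> ob C (src C f) /\ ob C (tgt C f)),
      (forall x, ob C x -> [/\ mor C (idm C x), src C (idm C x) = x
                                & tgt C (idm C x) = x]),
      (forall g f, composable C (g, f) ->
         [/\ mor C (comp C g f), src C (comp C g f) = src C f
           & tgt C (comp C g f) = tgt C g]),
      (forall f, mor C f -> comp C f (idm C (src C f)) = f
                            /\ comp C (idm C (tgt C f)) f = f) &
      (forall h g f, composable C (g, f) -> composable C (h, g) ->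
         comp C h (comp C g f) = comp C (comp C h g) f)].

(* k-category: objects and morphisms are k-spaces, structure maps continuous;
   composition is continuous on the composable pairs, topologised as a
   subspace of the k-product Mor × Mor. *)
Definition is_kcategory (O M : topologicalType) (C : cat_data O M) : Prop :=
  [/\ is_category C, is_kspace (ob C), is_kspace (mor C) &
    [/\ cont (mor C) (relopen (mor C)) (ob C) (relopen (ob C)) (src C),
      cont (mor C) (relopen (mor C)) (ob C) (relopen (ob C)) (tgt C),
      cont (ob C) (relopen (ob C)) (mor C) (relopen (mor C)) (idm C) &
      cont (composable C)
           (fun W => exists V, kprod_open (mor C) (mor C) V /\ W = V `&` composable C)
           (mor C) (relopen (mor C)) (fun gf => comp C gf.1 gf.2)]].

Definition is_perfect (O M : topologicalType) (C : cat_data O M) : Prop :=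
  [/\ is_kcategory C, ob C !=set0 &
      homeo (mor C) (relopen (mor C)) (ob C `*` ob C) (kprod_open (ob C) (ob C))
            (fun f => (src C f, tgt C f))].

Definition full_subcat (O M : topologicalType) (C : cat_data O M) (X : set O)
  : cat_data O M :=
  CatData X [set f | mor C f /\ X (src C f) /\ X (tgt C f)]
          (src C) (tgt C) (idm C) (comp C).

(* Main.v *)
Require Import Defs.
From mathcomp Require Import all_boot all_order boolp classical_sets functions topology.
Local Open Scope classical_set_scope.

Lemma closedXX (T : topologicalType) (X : set T) : closed X -> closed (X `*` X).
Proof.
move=> cX; rewrite -openC.
have -> : ~` (X `*` X) = (fst @^-1` (~` X)) `|` (snd @^-1` (~` X)).
  apply/seteqP; split => -[a b] /=.
    by move=> /not_andP [] ?; [left|right].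
  by case=> H [].
have oC := closed_openC cX.
apply: openU; apply: open_comp => // -[a b] _; [exact: cvg_fst | exact: cvg_snd].
Qed.

Lemma relopenT (T : topologicalType) (U : set T) : relopen setT U <-> open U.
Proof.
split; first by case=> V [oV ->]; rewrite setIT.
by move=> oU; exists U; rewrite setIT.
Qed.

Lemma kopen_closed (T : topologicalType) (S U : set T) :
  closed S -> kopen S U -> kopen setT (U `|` ~` S).
Proof.
move=> cS [US kU]; split => // K _ cK.
have [V [oV E]] := kU (K `&` S) (@subIsetr _ _ _) (compact_closedI cK cS).
exists (V `|` ~` S); split; first by apply: openU => //; exact: closed_openC.
apply/seteqP; split => x /=.
  move=> [[Ux|nSx] Kx]; split => //; last by right.
  have : (U `&` (K `&` S)) x by split => //; split => //; exact: US.
  by rewrite E => -[]; left.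
move=> [[Vx|nSx] Kx]; split => //; last by right.
have [Sx|nSx] := pselect (S x); last by right.
have : (V `&` (K `&` S)) x by [].
by rewrite -E => -[]; left.
Qed.

Lemma kopen_sub (T : topologicalType) (S A : set T) :
  kopen setT A -> kopen S (A `&` S).
Proof.
move=> [_ kA]; split; first exact: subIsetr.
move=> K KS cK; have [V [oV E]] := kA K (fun _ _ => I) cK.
exists V; split => //; rewrite -E; apply/seteqP; split => x /=.
  by move=> [[]].
by move=> [Ax Kx]; split => //; split => //; exact: KS.
Qed.

Lemma kspace_closed (T : topologicalType) (S : set T) :
  is_kspace (setT : set T) -> closed S -> is_kspace S.
Proof.
move=> [H K] cS; split.
  move=> x y Sx Sy xy; have [U [V [oU oV Ux Vy UV]]] := H x y I I xy.
  exists (U `&` S), (V `&` S); split => //.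
  - case: oU => U' [oU' ->]; exists U'; split => //; by rewrite setIT.
  - case: oV => V' [oV' ->]; exists V'; split => //; by rewrite setIT.
  - by apply/seteqP; split => z // [[Uz _] [Vz _]]; rewrite -UV.
move=> U kU; have [V [oV E]] := K _ (@kopen_closed _ _ _ cS kU).
exists V; split => //; rewrite setIT in E; rewrite -E.
apply/seteqP; split => x /=.
  by move=> Ux; split; [left|exact: kU.1].
by move=> [[]].
Qed.

Lemma cont_restr (A B : topologicalType) (SA : set A) (SB : set B) (s : A -> B) :
  cont setT (relopen setT) setT (relopen setT) s ->
  (forall x, SA x -> SB (s x)) -> cont SA (relopen SA) SB (relopen SB) s.
Proof.
move=> [_ h] HS; split => // V [W [oW ->]] _.
have /relopenT oZ := h W (proj2 (@relopenT _ W) oW) (@subsetT _ _).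
exists (setT `&` s @^-1` W); split => //.
apply/seteqP; split => x /=.
  by move=> [Sx [Wx _]].
by move=> [[_ Wx] Sx]; split => //; split => //; exact: HS.
Qed.

Theorem mainTheorem6 (O M : topologicalType) (C : cat_data O M) :
  ob C = setT -> mor C = setT -> is_perfect C ->
  forall X : set O, X !=set0 -> X `<=` ob C ->
    closed X -> closed (mor (full_subcat C X)) ->
    is_perfect (full_subcat C X).
Proof.
move=> hO hM [[catC kO kM [cs ct ci cc]] _ hC] X neX _ cX cY.
rewrite hO in kO cs ct ci hC; rewrite hM in kM cs ct ci cc hC.
case: catC => c1 c2 c3 c4 c5.
rewrite setXTT in hC.
set Y := mor (full_subcat C X) in cY *.
have YP : forall f, Y f <-> X (src C f) /\ X (tgt C f).
  by move=> f; rewrite /Y /= hM; split => [[_ ?]|?].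
split => //; last first.
  case: hC => [[funC injC surjC] [_ hcont] hopen].
  split.
  - split; first by move=> f /YP.
    + move=> f g Yf Yg; apply: injC; exact: in_setT.
    + move=> [a b] [Xa Xb]; have [f _ e] := surjC (a, b) I.
      exists f => //; apply/YP; case: e => -> ->; done.
  - split; first by move=> f /YP.
    move=> V kV VXX.
    have kW := @kopen_closed _ _ _ (@closedXX _ _ cX) kV.
    have /relopenT oZ := hcont (V `|` ~` (X `*` X)) (ltac:(by rewrite /kprod_open setXTT)) (@subsetT _ _).
    exists (setT `&` (fun f => (src C f, tgt C f)) @^-1` (V `|` ~` (X `*` X))).
    split => //; apply/seteqP; split => f /=.
      by move=> [Yf Vf]; split => //; split => //; left.
    move=> [[_ [Vf|nXX]] Yf]; split => //.
    by exfalso; apply: nXX; apply/YP.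
  - move=> U UY [W [oW ->]].
    have := hopen W (@subsetT _ _) (proj2 (@relopenT _ W) oW).
    rewrite /kprod_open setXTT => /(@kopen_sub _ (X `*` X) _).
    congr kopen; apply/seteqP; split.
      move=> [a b] [[f Wf e] XXp]; exists f => //; split => //.
      by apply/YP; case: e => e1 e2; rewrite e1 e2.
    move=> p [f [Wf Yf] <-]; split; first by exists f.
    by apply/YP.
have compC : forall g f, composable C (g, f) <-> tgt C f = src C g.
  by move=> g f; rewrite /composable /= hM; split => [[_ [_ ?]]|?].
have compD : forall g f, composable (full_subcat C X) (g, f) <->
    [/\ Y g, Y f & tgt C f = src C g].
  by move=> g f; rewrite /composable /=; split => [[? [? ?]]|[? ? ?]].
have c3' : forall g f, composable (full_subcat C X) (g, f) ->
    [/\ Y (Defs.comp C g f), src C (Defs.comp C g f) = src C f & tgt C (Defs.comp C g f) = tgt C g].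
  move=> g f /compD [/YP [Xg1 Xg2] /YP [Xf1 Xf2] e].
  have [_ e1 e2] := c3 g f (proj2 (compC g f) e).
  by split => //; apply/YP; rewrite e1 e2.
split.
- split.
  + by move=> f /YP.
  + move=> x Xx; have [_ e1 e2] := c2 x (ltac:(by rewrite hO)).
    by split => //; apply/YP; rewrite e1 e2.
  + exact: c3'.
  + by move=> f _; apply: c4; rewrite hM.
  + move=> h g f /compD [_ _ e1] /compD [_ _ e2]; apply: c5; exact/compC.
- exact: kspace_closed.
- exact: kspace_closed.
split.
- by apply: cont_restr => // f /YP [].
- by apply: cont_restr => // f /YP [].
- apply: cont_restr => // x Xx.
  by have [_ e1 e2] := c2 x (ltac:(by rewrite hO)); apply/YP; rewrite e1 e2.
- split; first by move=> [g f] /c3' [].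
  move=> V [W [oW ->]] _.
  have [_ h] := cc.
  have [V0 [kV0 E0]] := h W (proj2 (@relopenT _ W) oW) (@subsetT _ _).
  exists (V0 `&` (Y `*` Y)); split.
    by apply: kopen_sub; move: kV0; rewrite /kprod_open setXTT.
  apply/seteqP; split => -[g f].
    move=> [cD [Wc Yc]].
    have cC : composable C (g, f) by apply/compC; case/compD: cD.
    have : (composable C `&` (fun gf => Defs.comp C gf.1 gf.2) @^-1` W) (g, f) by [].
    rewrite E0 => -[V0gf _].
    by case/compD: (cD) => Yg Yf _; split => //; split.
  move=> [[V0gf [Yg Yf]] cD].
  have cC : composable C (g, f) by apply/compC; case/compD: cD.
  have : (V0 `&` composable C) (g, f) by [].
  rewrite -E0 => -[_ Wc].
  by split => //; split => //; case: (c3' _ _ cD).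
Qed.
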